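(* For all integers $d\ge 1$ and $1\le p_1\le\cdots\le p_d\le n$ we have $$W_n(p_1,\ldots,p_d)=n^d-q_n(p_1,\ldots,p_d).$$ In particular, for $d=2$ and $1\le p\le q\le n$, $W_n(p,q)=n^2-(n-p+1)^2+(q-p)^2$.
   Context: A $d$-uniform $d$-partite hypergraph $H$ has vertex classes $V_1,\ldots,V_d$ and its edges are $d$-sets containing exactly one vertex from each $V_i$; only such $d$-sets are ever considered as possible edges. $K^d_{p_1,\ldots,p_d}$ is the complete $d$-uniform $d$-partite hypergraph with class sizes $p_1,\ldots,p_d$. A copy of $K^d_{p_1,\ldots,p_d}$ in $H$ is a choice of a permutation $\pi:[d]\to[d]$ and sets $S_i\subseteq V_i$ with $|S_i|=p_{\pi(i)}$ such that every $d$-set with one vertex from each $S_i$ is an edge of $H$ (the class sizes may appear in any order across $V_1,\ldots,V_d$). $H$ is weakly $K^d_{p_1,\ldots,p_d}$-saturated if all $d$-sets with one vertex from each $V_i$ that are not edges of $H$ can be added to $H$ one at a time, in some order, so that each added edge creates a new copy of $K^d_{p_1,\ldots,p_d}$ (i.e., one containing the added edge). $W_n(p_1,\ldots,p_d)$ is the minimum number of edges of a weakly $K^d_{p_1,\ldots,p_d}$-saturated $d$-uniform $d$-partite hypergraph with $n$ vertices in each class. For $x\in[n]^d$, $x_{(i)}$ denotes the $i$-th smallest entry of $x$ when sorted with repetitions; $q_n(p_1,\ldots,p_d)$ is the number of $x\in[n]^d$ with $x_{(i)}\ge p_i$ for all $1\le i\le d$. *)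

(* Defs.v *)
From mathcomp Require Import all_boot all_order all_fingroup.
Set Implicit Arguments. Unset Strict Implicit. Unset Printing Implicit Defensive.

(* Vertex class V_i (i : 'I_d) is a copy of 'I_n = {0,...,n-1} (representing [n]).
   A possible edge (a d-set with one vertex in each class) is a function
   x : 'I_d -> 'I_n, x i being the vertex chosen in V_i. *)
Definition edge (d n : nat) := {ffun 'I_d -> 'I_n}.

Definition hgraph (d n : nat) := {set edge d n}.

Definition copy_containing (d n : nat) (p : 'I_d -> nat) (G : hgraph d n)
  (e : edge d n) : Prop :=
  exists (pi : {perm 'I_d}) (S : 'I_d -> {set 'I_n}),
    [/\ forall i, #|S i| = p (pi i),
        forall i, e i \in S i
      & forall x : edge d n, (forall i, x i \in S i) -> x \in G].

Definition weakly_saturated (d n : nat) (p : 'I_d -> nat) (H : hgraph d n) : Prop :=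
  exists s : seq (edge d n),
    [/\ uniq s,
        forall x, (x \in s) = (x \notin H)
      & forall (s1 s2 : seq (edge d n)) (e : edge d n), s = s1 ++ e :: s2 ->
          copy_containing p (H :|: [set y in rcons s1 e]) e].

Definition is_W (d n : nat) (p : 'I_d -> nat) (w : nat) : Prop :=
  (exists H : hgraph d n, weakly_saturated p H /\ #|H| = w) /\
  (forall H : hgraph d n, weakly_saturated p H -> w <= #|H|).

(* Entries of x viewed in [n] (shift by one), sorted nondecreasingly;
   x_(i) (1-based i) is nth 0 (sorted_entries x) (i-1). *)
Definition sorted_entries (d n : nat) (x : edge d n) : seq nat :=
  sort leq [seq (x i).+1 | i <- enum 'I_d].

Definition qn (d n : nat) (p : 'I_d -> nat) : nat :=
  #|[set x : edge d n | [forall i : 'I_d, p i <= nth 0 (sorted_entries x) i]]|.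

(* Main.v *)
Require Import Defs.
From mathcomp Require Import all_boot all_order all_fingroup all_algebra.
From mathcomp Require Import zify.
Set Implicit Arguments. Unset Strict Implicit. Unset Printing Implicit Defensive.
Import GRing.Theory Num.Theory.

Lemma countA (s : seq nat) k v : sorted leq s -> k < size s ->
  k < count (fun y => y <= v) s -> nth 0 s k <= v.
Proof.
move=> Hs Hk Hc; rewrite leqNgt; apply/negP => Hv.
move: Hc; rewrite -(cat_take_drop k s) count_cat.
have -> : count (fun y => y <= v) (drop k s) = 0.
  apply/eqP; rewrite -leqn0 leqNgt -has_count; apply/negP => /(has_nthP 0) [j].
  rewrite size_drop nth_drop => Hj Hle.
  have := sorted_leq_nth leq_trans leqnn 0 Hs.
  move=> /(_ k (k + j)); rewrite !inE Hk => /(_ isT).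
  have Hkj : k + j < size s by lia.
  move=> /(_ Hkj (leq_addr _ _)) => H; lia.
have := count_size (fun y => y <= v) (take k s); rewrite size_take Hk; lia.
Qed.

Lemma countB (s : seq nat) k v : sorted leq s -> k < size s ->
  size s - k <= count (fun y => v <= y) s -> v <= nth 0 s k.
Proof.
move=> Hs Hk Hc; rewrite leqNgt; apply/negP => Hv.
move: Hc; rewrite -(cat_take_drop k.+1 s) count_cat.
have -> : count (fun y => v <= y) (take k.+1 s) = 0.
  apply/eqP; rewrite -leqn0 leqNgt -has_count; apply/negP => /(has_nthP 0) [j].
  rewrite size_take => Hj.
  have Hjk : j <= k by move: Hj; case: ifP => [_|/negbT]; lia.
  rewrite nth_take // => Hle.
  have := sorted_leq_nth leq_trans leqnn 0 Hs.
  move=> /(_ j k); rewrite !inE Hk => /(_ _ isT).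
  have Hj' : j < size s by lia.
  move=> /(_ Hj' Hjk) => H; lia.
have := count_size (fun y => v <= y) (drop k.+1 s); rewrite size_drop. move=> H1; rewrite cat_take_drop; lia.
Qed.


Lemma card_count (T : finType) (a : pred T) : #|[pred i | a i]| = count a (enum T).
Proof.
rewrite cardE /enum_mem size_filter; by rewrite filter_predT; apply: eq_count => x.
Qed.

Lemma card_ltord n k : k <= n -> #|[set v : 'I_n | v < k]| = k.
Proof.
move=> kn; transitivity #|[set widen_ord kn v | v in 'I_k]|; last first.
  by rewrite card_imset ?card_ord // => a b /(congr1 val) /= /val_inj.
apply: eq_card => v; rewrite !inE; apply/idP/imsetP.
  by move=> vk; exists (Ordinal vk) => //; apply: val_inj.
by case=> w _ ->; rewrite /= ltn_ord.
Qed.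

Lemma card_geord n k : k <= n -> #|[set v : 'I_n | k <= v]| = n - k.
Proof.
move=> kn; have := cardsC [set v : 'I_n | v < k]; rewrite card_ltord // card_ord.
have -> : ~: [set v : 'I_n | v < k] = [set v : 'I_n | k <= v].
  by apply/setP => v; rewrite !inE -leqNgt.
lia.
Qed.


Section Q.
Variables (d n : nat) (p : 'I_d -> nat).

Definition goodQ (x : edge d n) :=
  [exists pi : {perm 'I_d}, [forall i, p (pi i) <= (x i).+1]].

Lemma se_size (x : edge d n) : size (sorted_entries x) = d.
Proof. by rewrite /sorted_entries size_sort size_map size_enum_ord. Qed.

Lemma se_sorted (x : edge d n) : sorted leq (sorted_entries x).
Proof. exact: (sort_sorted leq_total). Qed.

Lemma se_count (x : edge d n) (a : pred nat) :
  count a (sorted_entries x) = #|[pred i | a (x i).+1]|.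
Proof.
rewrite /sorted_entries.
have Hp : perm_eq (sort leq [seq (x i).+1 | i <- enum 'I_d]) [seq (x i).+1 | i <- enum 'I_d].
  by rewrite perm_sort.
by rewrite (seq.permP Hp) count_map card_count.
Qed.

Definition ltx (x : edge d n) (i' i : 'I_d) :=
  ((x i' : nat) < x i) || ((x i' == x i :> nat) && (i' < i)).

Definition rk (x : edge d n) i := #|[set i' | ltx x i' i]|.

Lemma rk_lt x i : rk x i < d.
Proof.
rewrite /rk; apply: (@leq_trans #|'I_d|); last by rewrite card_ord.
apply: proper_card; apply/properP; split.
  by apply/subsetP.
by exists i => //; rewrite inE /ltx ltnn eqxx ltnn.
Qed.

Definition rkf x (i : 'I_d) : 'I_d := Ordinal (rk_lt x i).

Lemma ltx_trans x a b c : ltx x a b -> ltx x b c -> ltx x a c.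
Proof.
rewrite /ltx => /orP [H1|/andP [/eqP H1 H1']] /orP [H2|/andP [/eqP H2 H2']];
  apply/orP; (try by left; lia); right; apply/andP; split; try (apply/eqP; lia); lia.
Qed.

Lemma ltx_total x a b : a != b -> ltx x a b || ltx x b a.
Proof.
move=> Hab; rewrite /ltx.
have : (a : nat) != b by [].
case: (ltngtP (x a) (x b)) => //= H; rewrite ?orbT //.
by case: (ltngtP a b).
Qed.

Lemma rk_sub x a b : ltx x a b -> [set i' | ltx x i' a] \proper [set i' | ltx x i' b].
Proof.
move=> Hab; apply/properP; split.
  by apply/subsetP => c; rewrite !inE => H; apply: ltx_trans H Hab.
exists a; first by rewrite inE.
by rewrite inE /ltx ltnn eqxx ltnn.
Qed.

Lemma rkf_inj x : injective (rkf x).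
Proof.
move=> a b /(congr1 val) /= H; apply/eqP; apply/negPn/negP => Hab.
case/orP: (ltx_total x Hab) => /rk_sub /proper_card; move: H; rewrite /rk; lia.
Qed.

Hypothesis pmono : forall i j : 'I_d, i <= j -> p i <= p j.

Lemma goodQ_iff (x : edge d n) :
  [forall i, p i <= nth 0 (sorted_entries x) i] = goodQ x.
Proof.
apply/idP/idP.
- move/forallP => H; apply/existsP; exists (perm (@rkf_inj x)); apply/forallP => i.
  rewrite permE; apply: (leq_trans (H _)); apply: countA.
  + exact: se_sorted.
  + by rewrite se_size.
  rewrite se_count /=.
  apply: (@leq_trans #|i |: [set i' | ltx x i' i]|).
    by rewrite cardsU1 inE /ltx ltnn eqxx ltnn.
  apply: subset_leq_card; apply/subsetP => c; rewrite !inE.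
  case/orP => [/eqP -> //|]; rewrite /ltx; case/orP => [H1|/andP [/eqP H1 _]]; lia.
- case/existsP => pi /forallP H; apply/forallP => k.
  apply: countB; first exact: se_sorted.
    by rewrite se_size.
  rewrite se_size se_count.
  apply: (@leq_trans #|pi @^-1: [set j : 'I_d | k <= j]|).
    by rewrite card_preimset ?card_geord // ?(ltnW (ltn_ord k)) //; apply: perm_inj.
  apply: subset_leq_card; apply/subsetP => c; rewrite !inE => Hc.
  by apply: leq_trans (H c); apply: pmono.
Qed.

End Q.


Section Lag.
Local Open Scope ring_scope.
Variable n : nat.
Implicit Types (S : {set 'I_n}) (v w : 'I_n).

Definition pt v : rat := (v : nat)%:R.
Definition ell S v : {poly rat} := \prod_(w <- enum S | w != v) ('X - (pt w)%:P).
Definition cS S v : rat := (\prod_(w <- enum S | w != v) (pt v - pt w))^-1.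

Lemma pt_inj : injective pt.
Proof. by move=> a b /eqP; rewrite /pt eqr_nat => /eqP /val_inj. Qed.

Lemma ell_at S v : (ell S v).[pt v] = (cS S v)^-1.
Proof. by rewrite /cS invrK /ell horner_prod; apply: eq_bigr => w _; rewrite hornerXsubC. Qed.

Lemma ell_at_neq0 S v : (ell S v).[pt v] != 0.
Proof.
rewrite /ell horner_prod prodf_seq_neq0; apply/allP => w _; apply/implyP => H.
by rewrite hornerXsubC subr_eq0; apply/eqP => /pt_inj /eqP; rewrite eq_sym (negbTE H).
Qed.

Lemma cS_neq0 S v : cS S v != 0.
Proof. by rewrite -[cS S v]invrK -ell_at invr_eq0 ell_at_neq0. Qed.

Lemma ell_other S v u : u \in S -> u != v -> (ell S v).[pt u] = 0.
Proof.
move=> uS uv; rewrite /ell horner_prod -big_filter.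
rewrite (bigD1_seq u) /=; first by rewrite hornerXsubC subrr mul0r.
  by rewrite mem_filter uv mem_enum.
by rewrite filter_uniq // enum_uniq.
Qed.

Lemma size_ell S v : v \in S -> size (ell S v) = #|S|.
Proof.
move=> vS; rewrite /ell -big_filter size_prod_XsubC size_filter.
have := count_predC (pred1 v) (enum S).
rewrite count_uniq_mem ?enum_uniq // mem_enum vS -cardE.
have -> : count (predC (pred1 v)) (enum S) = count (fun w => w != v) (enum S).
  by apply: eq_count.
by move=> <-.
Qed.

Lemma coef_ell S v : v \in S -> (ell S v)`_(#|S|.-1) = 1.
Proof.
move=> vS; have := monic_prod_XsubC (enum S) (fun w => w != v) pt.
by rewrite -/(ell S v) qualifE /= lead_coefE size_ell // => /eqP.
Qed.

Lemma lagrange_zero S (P : {poly rat}) : (size P < #|S|)%N ->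
  \sum_(v in S) cS S v * P.[pt v] = 0.
Proof.
move=> HP.
pose L := \sum_(v in S) (cS S v * P.[pt v]) *: ell S v.
have HL : L = P.
  apply/eqP; rewrite -subr_eq0; apply/negPn/negP => Hnz.
  have := @max_poly_roots _ _ [seq pt v | v <- enum S] Hnz.
  rewrite size_map -cardE map_inj_uniq ?enum_uniq //; last exact: pt_inj.
  have Hs : (size (L - P)%R <= #|S|)%N.
    apply: leq_trans (size_polyD _ _) _; rewrite size_polyN geq_max (ltnW HP) andbT.
    apply: leq_trans (size_sum _ _ _) _; apply/bigmax_leqP => v vS.
    by apply: leq_trans (size_scale_leq _ _) _; rewrite size_ell.
  have Hr : all (root (L - P)) [seq pt v | v <- enum S].
    apply/allP => z /mapP [u]; rewrite mem_enum => uS ->.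
    rewrite /root hornerD hornerN /L horner_sum (bigD1 u) //= big1.
      rewrite hornerZ ell_at mulrAC mulfV; first by rewrite mul1r addr0 subrr.
      by have := cS_neq0 S u; rewrite /cS invr_eq0.
    by move=> w /andP [wS wu]; rewrite hornerZ ell_other ?mulr0 // eq_sym.
  by move=> H; have := H Hr isT; rewrite ltnNge Hs.
have := congr1 (fun q : {poly rat} => q`_(#|S|.-1)) HL => /=.
have HP0 : P`_(#|S|.-1) = 0.
  by apply: nth_default; move: HP; case: #|S|.
rewrite HP0 /L coef_sum => H; apply: etrans _ H; apply: eq_bigr => v vS.
by rewrite coefZ coef_ell // mulr1.
Qed.

End Lag.


Section Lower.
Local Open Scope ring_scope.
Variables (d n : nat) (p : 'I_d -> nat).

Definition ff (j : nat) (v : 'I_n) : rat := \prod_(l < j) (pt v - l%:R).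
Definition Qp (j : nat) : {poly rat} := \prod_(l < j) ('X - (l%:R)%:P).

Lemma Qp_eval j v : (Qp j).[pt v] = ff j v.
Proof. by rewrite /Qp horner_prod; apply: eq_bigr => l _; rewrite hornerXsubC. Qed.

Lemma size_Qp j : size (Qp j) = j.+1.
Proof. by rewrite /Qp size_prod_XsubC /index_enum; unlock; rewrite -enumT size_enum_ord. Qed.

Lemma ff_zero j (v : 'I_n) : (v < j)%N -> ff j v = 0.
Proof.
move=> vj; rewrite /ff (bigD1 (Ordinal vj)) //= /pt subrr mul0r //.
Qed.

Lemma ff_nz (v : 'I_n) : ff v v != 0.
Proof.
apply/prodf_neq0 => l _; rewrite subr_eq0 /pt eqr_nat; apply/eqP => H.
by have := ltn_ord l; rewrite -H ltnn.
Qed.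

Definition g (J x : edge d n) : rat := \prod_i ff (J i) (x i).

Definition wt (J : edge d n) : nat := (\sum_i (J i : nat))%N.

Lemma wt_lt (J K : edge d n) : (forall i, J i <= K i)%N -> J != K -> (wt J < wt K)%N.
Proof.
move=> HJK HJK'; have [i0 Hi0] : exists i0, J i0 != K i0.
  apply/existsP; move: HJK'; apply: contraR => /existsPn H.
  by apply/eqP/ffunP => i; apply/eqP/negPn/H.
rewrite /wt (bigD1 i0) //= [X in (_ < X)%N](bigD1 i0) //=.
have Hl : (\sum_(i | i != i0) (J i : nat) <= \sum_(i | i != i0) (K i : nat))%N.
  by apply: leq_sum => i _; apply: HJK.
have H2 : (J i0 < K i0)%N by rewrite ltn_neqAle HJK andbT.
by rewrite -addSn; apply: leq_add.
Qed.

Lemma box_orth (pi : {perm 'I_d}) (S : 'I_d -> {set 'I_n}) :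
  (forall i, #|S i| = p (pi i)) -> forall J : edge d n, ~~ goodQ p J ->
  \sum_(x : edge d n | [forall i, x i \in S i])
     (\prod_i cS (S i) (x i)) * g J x = 0.
Proof.
move=> HS J HJ.
have [i0 Hi0] : exists i0, ((J i0 : nat).+2 <= p (pi i0))%N.
  move: HJ; rewrite negb_exists => /forallP /(_ pi); rewrite negb_forall.
  by case/existsP => i; rewrite -ltnNge => H; exists i.
have -> : \sum_(x : edge d n | [forall i, x i \in S i]) (\prod_i cS (S i) (x i)) * g J x
   = \prod_i \sum_(v in S i) cS (S i) v * ff (J i) v.
  rewrite bigA_distr_big_dep; apply: eq_big.
    by move=> x; apply/forallP/familyP.
  by move=> x _; rewrite /g -big_split.
rewrite (bigD1 i0) //= [X in X * _](_ : _ = 0) ?mul0r //.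
apply: etrans (@lagrange_zero n (S i0) (Qp (J i0)) _); last by rewrite size_Qp HS.
by apply: eq_bigr => v _; rewrite Qp_eval.
Qed.

Definition Bad : {set edge d n} := [set x | ~~ goodQ p x].

Lemma lower (H : hgraph d n) : weakly_saturated p H -> (#|Bad| <= #|H|)%N.
Proof.
move=> [s [Hu Hmem Hstep]].
pose M : 'M[rat]_(#|Bad|, #|H|) := \matrix_(a, b) g (enum_val a) (enum_val b).
suff Hfree : forall u : 'rV[rat]_#|Bad|, u *m M = 0 -> u = 0.
  have : row_free M.
    rewrite -kermx_eq0; apply/eqP/matrixP => i j; rewrite mxE.
    have := Hfree (row i (kermx M)); rewrite -row_mul mulmx_ker row0 => /(_ erefl).
    by move/matrixP => /(_ 0 j); rewrite !mxE.
  by rewrite /row_free => /eqP <-; apply: rank_leq_col.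
move=> u Hu0.
pose Gf x := \sum_a u 0 a * g (enum_val a) x.
have GH : forall x, x \in H -> Gf x = 0.
  move=> x xH; have := congr1 (fun A : 'M[rat]_(1, #|H|) => A 0 (enum_rank_in xH x)) Hu0.
  rewrite !mxE => <-; apply: eq_bigr => a _.
  by rewrite mxE enum_rankK_in.
have Gall : forall x, Gf x = 0.
  have Htake : forall k y, y \in take k s -> Gf y = 0.
    elim=> [|k IH] y; first by rewrite take0.
    case: (ltnP k (size s)) => Hk; last first.
      have E1 : take k.+1 s = take k s by rewrite !take_oversize // ltnW.
      by rewrite E1; apply: IH.
    pose e := nth y s k.
    have Hs : s = take k s ++ e :: drop k.+1 s by rewrite -drop_nth // cat_take_drop.
    have Ge : Gf e = 0.
      have [pi [S [HS HeS Hbox]]] := Hstep _ _ _ Hs.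
      have Hsum := box_orth HS.
      have : \sum_(x : edge d n | [forall i, x i \in S i]) (\prod_i cS (S i) (x i)) * Gf x = 0.
        rewrite /Gf.
        under eq_bigr => x _ do rewrite mulr_sumr.
        rewrite exchange_big /=; apply: big1 => a _.
        have Ha : ~~ goodQ p (enum_val a) by have := enum_valP a; rewrite inE.
        rewrite -[in RHS](mulr0 (u 0 a)) -[in RHS](Hsum _ Ha) mulr_sumr.
        by apply: eq_bigr => x _; rewrite mulrCA.
      rewrite (bigD1 e); last by apply/forallP.
      rewrite /= [X in _ + X]big1 ?addr0.
        move/eqP; rewrite mulf_eq0 => /orP [H0|/eqP //]; exfalso; move: H0; apply/negP.
        by apply/prodf_neq0 => i _; exact: cS_neq0.
      move=> x /andP [xS xe].
      have := Hbox x (fun i => (forallP xS) i); rewrite !inE => /orP [/GH -> |]; first by rewrite mulr0.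
      rewrite mem_rcons inE (negbTE xe) /= => /IH ->; by rewrite mulr0.
    rewrite (take_nth y Hk) mem_rcons inE => /orP [/eqP -> //|]; exact: IH.
  move=> x; case xH: (x \in H); first exact: GH.
  apply: (Htake (size s)); rewrite take_size Hmem xH //.
apply/rowP => a; rewrite mxE; apply/eqP/negPn/negP => Hna.
case: (@arg_minnP _ a (fun a => u 0 a != 0) (fun a => wt (enum_val a)) Hna) => a0 Ha0 Hmin.
have := Gall (enum_val a0); rewrite /Gf (bigD1 a0) //= [X in _ + X]big1 ?addr0.
  move/eqP; rewrite mulf_eq0 (negbTE Ha0) /= /g; apply/negP.
  by apply/prodf_neq0 => i _; exact: ff_nz.
move=> b Hb0; case: (eqVneq (u 0 b) 0) => [->|Hb]; first by rewrite mul0r.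
have Hw := Hmin b Hb.
case: (boolP [exists i, (enum_val a0 i < enum_val b i)%N]).
  case/existsP => i Hi; rewrite /g (bigD1 i) //= ff_zero // mul0r mulr0 //.
rewrite negb_exists => /forallP Hle.
have : (wt (enum_val b) < wt (enum_val a0))%N.
  apply: wt_lt; first by move=> i; rewrite leqNgt; apply: Hle.
  by apply: contra Hb0 => /eqP /enum_val_inj ->.
by rewrite ltnNge Hw.
Qed.

End Lower.


Lemma in_prefix (T : eqType) (f : T -> nat) s1 e s2 x :
  sorted (fun a b => f a <= f b) (s1 ++ e :: s2) -> x \in s1 ++ e :: s2 ->
  f x < f e -> x \in s1.
Proof.
move=> Hs; rewrite mem_cat in_cons; case/orP => [//|/orP [/eqP -> |xs2]].
  by rewrite ltnn.
have Htr : transitive (fun a b : T => f a <= f b) by move=> b a c; apply: leq_trans.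
have [_ /(order_path_min Htr)] := cat_sorted2 Hs.
by move=> /allP /(_ x xs2); rewrite leqNgt => /negbTE ->.
Qed.

Section Upper.
Variables (d n : nat) (p : 'I_d -> nat).
Hypothesis pbd : forall i, 1 <= p i <= n.

Lemma upper : weakly_saturated p (@Bad d n p).
Proof.
pose s := sort (fun x y => wt x <= wt y) (enum [set x : edge d n | goodQ p x]).
have Hsort : sorted (fun x y => wt x <= wt y) s.
  by apply: sort_sorted => x y; apply: leq_total.
exists s; split.
- by rewrite sort_uniq enum_uniq.
- by move=> x; rewrite mem_sort mem_enum !inE negbK.
move=> s1 s2 e Hs.
have : e \in s by rewrite Hs mem_cat in_cons eqxx orbT.
rewrite mem_sort mem_enum inE => /existsP [pi /forallP Hpi].
exists pi, (fun i => e i |: [set v : 'I_n | (v : nat).+1 < p (pi i)]); split.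
- move=> i; rewrite cardsU1 inE.
  have -> : [set v : 'I_n | (v : nat).+1 < p (pi i)] = [set v : 'I_n | v < (p (pi i)).-1].
    by apply/setP => v; rewrite !inE; have := pbd (pi i); lia.
  rewrite card_ltord; last by have := pbd (pi i); lia.
  have := pbd (pi i); have := Hpi i; lia.
- by move=> i; rewrite setU11.
move=> x Hx; rewrite !inE.
case: (eqVneq x e) => [->|xe]; first by rewrite mem_rcons in_cons eqxx orbT.
case Hg: (goodQ p x) => //=.
rewrite mem_rcons in_cons (negbTE xe) /=.
apply: (in_prefix (f := @wt d n) (s2 := s2) (e := e)); first by move: Hsort; rewrite Hs.
  have : x \in s by rewrite mem_sort mem_enum inE.
  by rewrite Hs.
apply: wt_lt => // i; have := Hx i; rewrite !inE => /orP [/eqP -> //|].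
have := Hpi i; lia.
Qed.

End Upper.


Lemma card_edge d n : #|edge d n| = n ^ d.
Proof. by rewrite /edge card_ffun !card_ord. Qed.

Lemma qn_good d n (p : 'I_d -> nat) : (forall i j : 'I_d, i <= j -> p i <= p j) ->
  @qn d n p = #|[set x : edge d n | goodQ p x]|.
Proof. by move=> pm; rewrite /qn; apply: eq_card => x; rewrite !inE goodQ_iff. Qed.

Lemma part1 d n (p : 'I_d -> nat) : (forall i, 1 <= p i <= n) ->
  (forall i j : 'I_d, i <= j -> p i <= p j) -> @is_W d n p (n ^ d - @qn d n p).
Proof.
move=> pb pm.
have HB : #|@Bad d n p| = n ^ d - @qn d n p.
  rewrite (@qn_good d n p pm) -(card_edge d n) -(cardsC [set x : edge d n | goodQ p x]).
  have -> : ~: [set x : edge d n | goodQ p x] = @Bad d n p.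
    by apply/setP => x; rewrite !inE.
  by rewrite addKn.
split; first by exists (@Bad d n p); split => //; apply: upper.
by move=> H HW; rewrite -HB; apply: lower.
Qed.

Definition o1 : 'I_2 := Ordinal (isT : 1 < 2).

Lemma I2 (i : 'I_2) : i = ord0 \/ i = o1.
Proof. by case: i => [[|[|]]] //= Hi; [left|right]; apply: val_inj. Qed.

Lemma se2 n (x : edge 2 n) :
  sorted_entries x = [:: minn (x ord0).+1 (x o1).+1; maxn (x ord0).+1 (x o1).+1].
Proof.
apply: (sorted_eq leq_trans anti_leq).
- exact: (sort_sorted leq_total).
- by rewrite /= andbT geq_min leq_maxl.
rewrite /sorted_entries perm_sort !enum_ordSl enum_ord0 /=.
have -> : lift ord0 (@ord0 0) = o1 by apply: val_inj.
case: (leqP (x ord0).+1 (x o1).+1) => H.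
  by [].
by rewrite (perm_catC [:: _] [:: _]).
Qed.

Lemma part2 n p q : 1 <= p -> p <= q -> q <= n ->
  @is_W 2 n (fun i : 'I_2 => if val i == 0 then p else q)
        (n ^ 2 - (n - p + 1) ^ 2 + (q - p) ^ 2).
Proof.
move=> p1 pq qlen.
set p' := fun i : 'I_2 => _.
have W := @part1 2 n p'.
have H1 : forall i, 1 <= p' i <= n by move=> i; rewrite /p'; case: ifP => _; lia.
have H2 : forall i j : 'I_2, i <= j -> p' i <= p' j.
  move=> i j; rewrite /p'; case: (I2 i) => ->; case: (I2 j) => -> //=; lia.
have := W H1 H2.
pose A := [set v : 'I_n | p <= (v : nat).+1].
pose B := [set v : 'I_n | (p <= (v : nat).+1) && ((v : nat).+1 < q)].
have HA : #|A| = n - p + 1.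
  have -> : A = [set v : 'I_n | p.-1 <= v] by apply/setP => v; rewrite !inE; lia.
  rewrite card_geord; lia.
have HB : #|B| = q - p.
  have -> : B = [set v : 'I_n | v < q.-1] :\: [set v : 'I_n | v < p.-1].
    by apply/setP => v; rewrite !inE; lia.
  rewrite cardsD.
  have -> : [set v : 'I_n | v < q.-1] :&: [set v : 'I_n | v < p.-1] = [set v : 'I_n | v < p.-1].
    by apply/setP => v; rewrite !inE; lia.
  rewrite !card_ltord; lia.
have Hq : @qn 2 n p' = (n - p + 1) ^ 2 - (q - p) ^ 2.
  rewrite /qn.
  have -> : [set x : edge 2 n | [forall i, p' i <= nth 0 (sorted_entries x) i]] =
     [set x : edge 2 n | x \in ffun_on (mem A)] :\: [set x : edge 2 n | x \in ffun_on (mem B)].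
    apply/setP => x.
    have E : forall (R : {set 'I_n}), (x \in ffun_on (mem R)) = (x ord0 \in R) && (x o1 \in R).
      move=> R; apply/ffun_onP/andP => [H|[Ha Hb] i]; first by split; apply: H.
      by case: (I2 i) => ->.
    rewrite in_setD !in_set se2 !E !inE.
    apply/forallP/idP => [H|H i].
      have := H ord0; have := H o1; rewrite /p' /=; lia.
    case: (I2 i) => -> /=; rewrite /p' /=; move: H; case/and3P => /negP Hn Ha Hb.
      by rewrite leq_min Ha Hb.
    rewrite leq_max; apply/negPn/negP; rewrite negb_or -!ltnNge => /andP [K1 K2]; apply: Hn.
    by rewrite Ha Hb K1 K2.
  rewrite cardsD.
  have -> : [set x : edge 2 n | x \in ffun_on (mem A)] :&: [set x : edge 2 n | x \in ffun_on (mem B)]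
      = [set x : edge 2 n | x \in ffun_on (mem B)].
    apply/setP => x; rewrite !inE; apply/andP/idP => [[] //|H]; split => //.
    apply/ffun_onP => i; move/ffun_onP: H => /(_ i); rewrite !inE; lia.
  have C : forall R : {set 'I_n}, #|[set x : edge 2 n | x \in ffun_on (mem R)]| = #|R| ^ 2.
    by move=> R; rewrite cardsE /edge card_ffun_on card_ord.
  by rewrite !C HA HB.
rewrite Hq.
have Ha : n - p + 1 <= n by lia.
have Hb : q - p <= n - p + 1 by lia.
have := leq_exp2r (n - p + 1) n (isT : 0 < 2); rewrite Ha.
have := leq_exp2r (q - p) (n - p + 1) (isT : 0 < 2); rewrite Hb.
move: ((n - p + 1) ^ 2) ((q - p) ^ 2) (n ^ 2) => a b c H3 H4.
have -> : c - (a - b) = c - a + b by lia.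
by [].
Qed.


Theorem theorem2 :
  (forall (d n : nat) (p : 'I_d -> nat),
     1 <= d ->
     (forall i : 'I_d, 1 <= p i <= n) ->
     (forall i j : 'I_d, i <= j -> p i <= p j) ->
     @is_W d n p (n ^ d - @qn d n p))
  /\
  (forall (n p q : nat), 1 <= p -> p <= q -> q <= n ->
     @is_W 2 n (fun i : 'I_2 => if val i == 0 then p else q)
          (n ^ 2 - (n - p + 1) ^ 2 + (q - p) ^ 2)).
Proof.
split.
- by move=> d n p _ pb pm; apply: part1.
- exact: part2.
Qed.
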